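(* The presentations $$\mathcal P_1=\langle a,b,c,d,r,s\mid ab\bar a r,\ \bar r\bar b c s,\ \bar s d\bar c\bar d\rangle,\qquad \mathcal P_2=\langle a,b,c,d,r,s,t,u,v\mid abr,\ \bar r\bar a s,\ \bar s\bar b t,\ \bar t c u,\ \bar u d v,\ \bar v\bar c\bar d\rangle$$ (where $\bar x=x^{-1}$) are of small cancellation type $C(4)$–$T(5)$ and $C(3)$–$T(7)$ respectively, both present the fundamental group of the closed orientable surface of genus two, and neither is a Dehn presentation.
   Context: $C(p)$ and $T(q)$ are the standard small cancellation conditions (no relator in the symmetrized closure is a product of fewer than $p$ pieces; $T(q)$ is the standard condition on cycles of relators of length between 3 and $q-1$). A presentation is a Dehn presentation if every nonempty cyclically reduced word representing the identity contains a subword $v$ of (a cyclic permutation of) some relator $r^{\pm1}$ with $|v|>|r|/2$. *)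

(* Defs.v *)
From Stdlib Require Import Relations.
From mathcomp Require Import all_boot.
Set Implicit Arguments. Unset Strict Implicit. Unset Printing Implicit Defensive.

(* A letter is (generator index, inverted?) ; (x,false) = x, (x,true) = x^-1. *)
Definition letter := (nat * bool)%type.
Definition word := seq letter.

Definition linv (l : letter) : letter := (l.1, ~~ l.2).
Definition winv (w : word) : word := rev (map linv w).

Definition wf_word (n : nat) (w : word) : bool := all (fun l => l.1 < n) w.

Fixpoint freely_reduced (w : word) : bool :=
  match w with
  | x :: ((y :: _) as t) => (y != linv x) && freely_reduced t
  | _ => true
  end.

Definition cyc_reduced (w : word) : bool :=
  freely_reduced w && (if w is x :: _ then last x w != linv x else true).

Definition relators := seq word.

(* Equality in the presented group: congruence generated by free
   cancellation and insertion/deletion of relators and their inverses. *)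
Inductive gstep (R : relators) : word -> word -> Prop :=
| gstep_free u1 u2 x : gstep R (u1 ++ x :: linv x :: u2) (u1 ++ u2)
| gstep_rel u1 u2 r : r \in R -> gstep R (u1 ++ r ++ u2) (u1 ++ u2)
| gstep_relinv u1 u2 r : r \in R -> gstep R (u1 ++ winv r ++ u2) (u1 ++ u2).

Definition word_eq (R : relators) : word -> word -> Prop :=
  clos_refl_sym_trans word (gstep R).

Definition symm (R : relators) : seq word :=
  flatten [seq [seq rot i r' | i <- iota 0 (size r')]
          | r' <- flatten [seq [:: r; winv r] | r <- R]].

Definition piece (R : relators) (p : word) : Prop :=
  p != [::] /\
  exists r1 r2, [/\ r1 \in symm R, r2 \in symm R, r1 != r2,
                    prefix p r1 & prefix p r2].

Definition C_cond (p : nat) (R : relators) : Prop :=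
  forall r, r \in symm R ->
  forall ps : seq word, (forall q, q \in ps -> piece R q) ->
  flatten ps = r -> p <= size ps.

Definition T_cond (q : nat) (R : relators) : Prop :=
  forall h, 3 <= h -> h < q ->
  forall rs : seq word, size rs = h ->
  (forall r, r \in rs -> r \in symm R) ->
  (forall i, i.+1 < h -> nth [::] rs i.+1 != winv (nth [::] rs i)) ->
  exists2 i, i < h &
    freely_reduced (nth [::] rs i ++ nth [::] rs ((i.+1) %% h)).

Definition Dehn (n : nat) (R : relators) : Prop :=
  forall w : word, wf_word n w -> w != [::] -> cyc_reduced w ->
  word_eq R w [::] ->
  exists v r, [/\ r \in symm R, infix v w, prefix v r & size r < 2 * size v].

Definition wsubst (f : nat -> word) (w : word) : word :=
  flatten [seq (if l.2 then winv (f l.1) else f l.1) | l <- w].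

Definition is_hom (n2 : nat) (R1 R2 : relators) (f : nat -> word) : Prop :=
  (forall x, wf_word n2 (f x)) /\
  (forall r, r \in R1 -> word_eq R2 (wsubst f r) [::]).

Definition pres_iso (n1 : nat) (R1 : relators) (n2 : nat) (R2 : relators) : Prop :=
  exists (f g : nat -> word),
    [/\ is_hom n2 R1 R2 f, is_hom n1 R2 R1 g,
        (forall x, x < n1 -> word_eq R1 (wsubst g (f x)) [:: (x, false)]) &
        (forall y, y < n2 -> word_eq R2 (wsubst f (g y)) [:: (y, false)])].

(* generators: a,b,c,d,r,s = 0,1,2,3,4,5 *)
Definition P1 : relators :=
  [:: [:: (0,false); (1,false); (0,true); (4,false)];
      [:: (4,true); (1,true); (2,false); (5,false)];
      [:: (5,true); (3,false); (2,true); (3,true)]].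

(* generators: a,b,c,d,r,s,t,u,v = 0,...,8 *)
Definition P2 : relators :=
  [:: [:: (0,false); (1,false); (4,false)];
      [:: (4,true); (0,true); (5,false)];
      [:: (5,true); (1,true); (6,false)];
      [:: (6,true); (2,false); (7,false)];
      [:: (7,true); (3,false); (8,false)];
      [:: (8,true); (2,true); (3,true)]].

(* standard presentation of pi_1 of the closed orientable genus-2 surface:
   <a1,b1,a2,b2 | [a1,b1][a2,b2]>, generators a1,b1,a2,b2 = 0,1,2,3 *)
Definition Surf2 : relators :=
  [:: [:: (0,false); (1,false); (0,true); (1,true);
          (2,false); (3,false); (2,true); (3,true)]].

(* Main.v *)
From Stdlib Require Import Relations.
Require Import Defs.
From mathcomp Require Import all_boot.
Set Implicit Arguments. Unset Strict Implicit. Unset Printing Implicit Defensive.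


Lemma weq_refl R w : word_eq R w w.
Proof. exact: rst_refl. Qed.
Lemma weq_sym R u v : word_eq R u v -> word_eq R v u.
Proof. exact: rst_sym. Qed.
Lemma weq_trans R u v w : word_eq R u v -> word_eq R v w -> word_eq R u w.
Proof. exact: rst_trans. Qed.
Lemma weq_step R u v : gstep R u v -> word_eq R u v.
Proof. exact: rst_step. Qed.

Lemma gstep_cons R x u v : gstep R u v -> gstep R (x :: u) (x :: v).
Proof.
case=> [u1 u2 y|u1 u2 r Hr|u1 u2 r Hr].
- exact: (gstep_free R (x :: u1) u2 y).
- exact: (gstep_rel (x :: u1) u2 Hr).
- exact: (gstep_relinv (x :: u1) u2 Hr).
Qed.

Lemma weq_cons R x u v : word_eq R u v -> word_eq R (x :: u) (x :: v).
Proof.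
elim=> [a b H|a|a b _ IH|a b c _ IH1 _ IH2].
- by apply: weq_step; apply: gstep_cons.
- exact: weq_refl.
- exact: weq_sym.
- exact: weq_trans IH2.
Qed.

Definition red_cons (x : letter) (acc : word) : word :=
  if acc is y :: t then (if y == linv x then t else x :: acc) else [:: x].
Definition reduce (w : word) : word := foldr red_cons [::] w.

Lemma weq_reduce R w : word_eq R w (reduce w).
Proof.
elim: w => [|x w IH] /=; first exact: weq_refl.
apply: weq_trans (weq_cons x IH) _.
rewrite /red_cons; case: (reduce w) => [|y t]; first exact: weq_refl.
case: eqP => [->|_]; last exact: weq_refl.
by apply: weq_step; exact: (gstep_free R [::] t x).
Qed.

Lemma weq_free_ins R z u v : word_eq R (u ++ v) (u ++ z ++ winv z ++ v).
Proof.
elim: z u v => [|x z IH] u v /=; first exact: weq_refl.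
have E1 : word_eq R (u ++ v) (u ++ x :: linv x :: v).
  by apply: weq_sym; apply: weq_step; apply: gstep_free.
apply: weq_trans E1 _.
have := IH (rcons u x) (linv x :: v).
rewrite -cats1 -!catA /= /winv map_cons rev_cons -cats1 -!catA /=.
by [].
Qed.

Lemma weq_conj_ins R z r b u v : r \in R ->
  word_eq R (u ++ v) (u ++ z ++ (if b then winv r else r) ++ winv z ++ v).
Proof.
move=> Hr.
apply: weq_trans (weq_free_ins R z u v) _.
apply: weq_sym; apply: weq_step.
case: b.
- by have := gstep_relinv (u ++ z) (winv z ++ v) Hr; rewrite -!catA.
- by have := gstep_rel (u ++ z) (winv z ++ v) Hr; rewrite -!catA.
Qed.

Definition move := (nat * word * nat * bool)%type.

Definition apply_move (R : relators) (m : move) (w : word) : word :=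
  let: (k, z, i, b) := m in
  if i < size R then
    reduce (take k w ++ z ++ (if b then winv (nth [::] R i) else nth [::] R i)
             ++ winv z ++ drop k w)
  else w.

Fixpoint run (R : relators) (w : word) (ms : seq move) : word :=
  if ms is m :: ms' then run R (apply_move R m w) ms' else reduce w.

Lemma weq_apply R m w : word_eq R w (apply_move R m w).
Proof.
case: m => [[[k z] i] b] /=.
case: ifP => Hi; last exact: weq_refl.
apply: weq_trans (weq_reduce R _).
rewrite -{1}(cat_take_drop k w).
exact: weq_conj_ins (mem_nth [::] Hi).
Qed.

Lemma weq_run R w ms : word_eq R w (run R w ms).
Proof.
elim: ms w => [|m ms IH] w /=; first exact: weq_reduce.
exact: weq_trans (weq_apply R m w) (IH _).
Qed.

Lemma weq_cert R w t ms1 ms2 : run R w ms1 == run R t ms2 -> word_eq R w t.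
Proof.
move/eqP=> E; apply: weq_trans (weq_run R w ms1) _.
by rewrite E; apply: weq_sym; apply: weq_run.
Qed.

Definition pieceb (R : relators) (p : word) : bool :=
  (p != [::]) && has (fun r1 => has (fun r2 => (r1 != r2) && prefix p r1 && prefix p r2)
                                    (symm R)) (symm R).

Lemma pieceP R p : piece R p -> pieceb R p.
Proof.
case=> Hp [r1 [r2 [H1 H2 H12 P1 P2]]].
rewrite /pieceb Hp /=; apply/hasP; exists r1 => //; apply/hasP; exists r2 => //.
by rewrite H12 P1 P2.
Qed.

Fixpoint cs (R : relators) (n : nat) (w : word) : bool :=
  if n is n'.+1 then (w == [::]) || has (fun i => pieceb R (take i w) && cs R n' (drop i w))
                                          (iota 1 (size w))
  else w == [::].

Lemma cs_flatten R ps : (forall q, q \in ps -> piece R q) -> cs R (size ps) (flatten ps).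
Proof.
elim: ps => [|q ps IH] //= Hps.
have Hq := pieceP (Hps q (mem_head _ _)).
apply/orP; right; apply/hasP; exists (size q).
  rewrite mem_iota size_cat /= add1n ltnS leq_addr andbT lt0n size_eq0.
  by case/andP: Hq.
rewrite take_size_cat // drop_size_cat // Hq /=.
by apply: IH => r Hr; apply: Hps; rewrite inE Hr orbT.
Qed.

Definition Cb (p : nat) (R : relators) : bool :=
  all (fun r => all (fun n => ~~ cs R n r) (iota 0 p)) (symm R).

Lemma CbP p R : Cb p R -> C_cond p R.
Proof.
move=> H r Hr ps Hps Hf.
have /allP Hn := (allP H r Hr).
rewrite leqNgt; apply/negP => Hlt.
have := Hn (size ps); rewrite mem_iota add0n Hlt => /(_ isT).
by rewrite -Hf cs_flatten.
Qed.

Definition okp (u v : word) : bool := ~~ freely_reduced (u ++ v) && (v != winv u).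

Fixpoint paths (S : seq word) (u : word) (k : nat) : seq (seq word) :=
  if k is k'.+1 then flatten [seq [seq u :: p | p <- paths S v k'] | v <- S & okp u v]
  else [:: [:: u]].

Lemma paths_complete S rest u :
  all (fun r => r \in S) rest ->
  (forall i, i < size rest -> okp (nth [::] (u :: rest) i) (nth [::] (u :: rest) i.+1)) ->
  u :: rest \in paths S u (size rest).
Proof.
elim: rest u => [|v rest IH] u /=; first by rewrite inE.
case/andP=> Hv Hall Hch.
apply/flatten_mapP; exists v.
  by rewrite mem_filter Hv andbT; exact: (Hch 0 isT).
apply: map_f; apply: IH => // i Hi.
exact: (Hch i.+1 Hi).
Qed.

Definition Tbh (R : relators) (h : nat) : bool :=
  all (fun u => all (fun p => freely_reduced (nth [::] p h.-1 ++ nth [::] p 0))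
                    (paths (symm R) u h.-1)) (symm R).

Definition Tb (q : nat) (R : relators) : bool := all (Tbh R) (iota 3 (q - 3)).

Lemma TbP q R : Tb q R -> T_cond q R.
Proof.
move=> H h h3 hq rs Hsz Hs Hinv.
have Hh : Tbh R h by apply: (allP H); rewrite mem_iota h3 /= subnKC // (leq_trans h3) // ltnW.
case: (boolP (has (fun i => freely_reduced (nth [::] rs i ++ nth [::] rs (i.+1 %% h))) (iota 0 h))).
  by case/hasP=> i; rewrite mem_iota add0n => Hi Hf; exists i.
move/hasPn=> Hno; exfalso.
case: rs Hsz Hs Hinv Hno => [|u rest] Hsz Hs Hinv Hno; first by rewrite -Hsz in h3.
have Hu : u \in symm R by apply: Hs; exact: mem_head.
have Hp : u :: rest \in paths (symm R) u (size rest).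
  apply: paths_complete.
    by apply/allP => r Hr; apply: Hs; rewrite inE Hr orbT.
  move=> i Hi; rewrite /okp.
  have Hih : i.+1 < h by rewrite -Hsz /=.
  have := Hno i; rewrite mem_iota add0n (ltn_trans (ltnSn i) Hih) /= modn_small // => -> //=.
  exact: Hinv.
have Es : h.-1 = size rest by rewrite -Hsz.
have := allP (allP Hh u Hu) (u :: rest); rewrite Es => /(_ Hp).
have := Hno (size rest); rewrite mem_iota add0n -Hsz ltnSn /= modnn => /(_ isT).
by move/negbTE => ->.
Qed.

Definition badb (R : relators) (w : word) : bool :=
  all (fun r => all (fun k => ~~ infix (take k r) w || (2 * size (take k r) <= size r))
                    (iota 0 (size r).+1)) (symm R).

Lemma not_Dehn n R w ms : wf_word n w -> w != [::] -> cyc_reduced w ->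
  run R w ms == [::] -> badb R w -> ~ Dehn n R.
Proof.
move=> Hwf Hne Hc Hrun Hb HD.
have Heq : word_eq R w [::] := @weq_cert R w [::] ms [::] Hrun.
have [v [r [Hr Hi Hp Hs]]] := HD w Hwf Hne Hc Heq.
have := allP (allP Hb r Hr) (size v).
rewrite mem_iota add0n ltnS size_prefix // => /(_ isT).
move: Hp; rewrite prefixE => /eqP ->.
by rewrite Hi /= leqNgt Hs.
Qed.

Lemma wf_nth n (tab : seq word) x : all (wf_word n) tab -> wf_word n (nth [::] tab x).
Proof.
move=> H; case: (ltnP x (size tab)) => Hx; first exact: (all_nthP [::] H).
by rewrite nth_default.
Qed.

Fixpoint homcert (R2 : relators) (f : nat -> word) (R1 : relators) (cs : seq (seq move)) : bool :=
  match R1, cs with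
  | [::], _ => true
  | r :: R1', c :: cs' => (run R2 (wsubst f r) c == [::]) && homcert R2 f R1' cs'
  | _, _ => false
  end.

Lemma homcertP R2 f R1 cs : homcert R2 f R1 cs ->
  forall r, r \in R1 -> word_eq R2 (wsubst f r) [::].
Proof.
elim: R1 cs => [|r0 R1 IH] [|c cs] //= /andP [H1 H2] r.
rewrite inE => /orP [/eqP ->|Hr]; last exact: IH H2 r Hr.
exact: (@weq_cert R2 (wsubst f r0) [::] c [::] H1).
Qed.

Fixpoint idcert (R1 : relators) (gf : nat -> word) (xs : seq nat) (cs : seq (seq move * seq move)) : bool :=
  match xs, cs with
  | [::], _ => true
  | x :: xs', c :: cs' => (run R1 (gf x) c.1 == run R1 [:: (x, false)] c.2) && idcert R1 gf xs' cs'
  | _, _ => false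
  end.

Lemma idcertP R1 gf n cs : idcert R1 gf (iota 0 n) cs ->
  forall x, x < n -> word_eq R1 (gf x) [:: (x, false)].
Proof.
move=> H x Hx.
have : x \in iota 0 n by rewrite mem_iota.
elim: (iota 0 n) cs H => [|y ys IH] [|c cs] //= /andP [H1 H2].
rewrite inE => /orP [/eqP ->|Hy]; last exact: IH H2 Hy.
exact: weq_cert H1.
Qed.

Definition ftab1 : seq word := [:: [:: (0,false)]; [:: (1,false)]; [:: (2,false)]; [:: (3,false)]; [:: (0,false); (1,true); (0,true)]; [:: (2,true); (1,false); (0,false); (1,true); (0,true)]].

Definition hcf1 : seq (seq move) := [:: [::]; [::]; [:: (8,[::],0,true)]].

Definition hcg1 : seq (seq move) := [:: [:: (8,[::],2,true); (6,[::],1,true); (4,[::],0,true)]].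

Definition ic1 : seq (seq move * seq move) := [:: ([::], [::]); ([::], [::]); ([::], [::]); ([::], [::]); ([::], [:: (1,[::],0,true)]); ([::], [:: (1,[::],1,true); (3,[::],0,true)])].

Definition dw1 : word := [:: (1,false); (0,true); (1,true); (2,false); (3,false); (2,true); (2,true); (3,true); (4,true); (1,true); (3,true); (5,true); (5,true); (3,false); (5,false); (4,true); (0,true); (4,false); (4,false); (0,false); (2,false); (5,false); (0,false); (1,false)].

Definition dc1 : seq move := [:: (24,[:: (0,true); (0,false); (1,true); (0,true)],0,true); (24,[:: (0,true); (4,false)],1,true); (22,[:: (0,true); (1,true); (0,true)],0,true); (20,[:: (0,true); (0,true)],0,true); (18,[:: (0,true); (1,false); (4,false)],1,true); (16,[:: (0,true); (2,false); (3,true); (5,false)],2,true); (14,[:: (0,true); (3,true); (5,false)],2,true); (12,[:: (0,true); (2,true); (1,false); (4,false)],1,true); (10,[:: (0,true); (5,false)],2,true); (8,[:: (0,true)],2,true); (6,[:: (0,true)],1,true); (4,[:: (0,true)],0,true)].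

Definition ftab2 : seq word := [:: [:: (0,false)]; [:: (1,false)]; [:: (2,false)]; [:: (3,false)]; [:: (1,true); (0,true)]; [:: (0,false); (1,true); (0,true)]; [:: (1,false); (0,false); (1,true); (0,true)]; [:: (2,true); (1,false); (0,false); (1,true); (0,true)]; [:: (3,true); (2,true); (1,false); (0,false); (1,true); (0,true)]].

Definition hcf2 : seq (seq move) := [:: [::]; [::]; [::]; [::]; [::]; [:: (8,[::],0,true)]].

Definition hcg2 : seq (seq move) := [:: [:: (8,[::],5,true); (7,[::],4,true); (6,[::],3,true); (5,[::],2,true); (4,[::],1,true); (3,[::],0,true)]].

Definition ic2 : seq (seq move * seq move) := [:: ([::], [::]); ([::], [::]); ([::], [::]); ([::], [::]); ([::], [:: (1,[::],0,true)]); ([::], [:: (1,[::],1,true); (2,[::],0,true)]); ([::], [:: (1,[::],2,true); (2,[::],1,true); (3,[::],0,true)]); ([::], [:: (1,[::],3,true); (2,[::],2,true); (3,[::],1,true); (4,[::],0,true)]); ([::], [:: (1,[::],4,true); (2,[::],3,true); (3,[::],2,true); (4,[::],1,true); (5,[::],0,true)])].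

Definition dw2 : word := [:: (1,false); (0,true); (1,true); (2,false); (3,false); (2,true); (8,false); (6,true); (3,true); (7,true); (8,true); (7,false); (5,true); (4,false); (5,false); (0,false); (6,false); (4,true)].

Definition dc2 : seq move := [:: (18,[:: (0,true); (0,false); (4,false)],1,true); (19,[:: (0,true); (5,false)],2,true); (18,[:: (0,true); (1,true); (0,true)],0,true); (17,[:: (0,true); (4,false)],1,true); (16,[:: (0,true); (0,true)],0,true); (15,[:: (0,true); (1,false); (5,false)],2,true); (14,[:: (0,true); (6,false)],3,true); (13,[:: (0,true); (2,false); (8,false)],5,true); (12,[:: (0,true); (3,true); (7,false)],4,true); (11,[:: (0,true); (8,false)],5,true); (10,[:: (0,true); (2,true); (6,false)],3,true); (9,[:: (0,true); (7,false)],4,true); (8,[:: (0,true)],5,true); (7,[:: (0,true)],4,true); (6,[:: (0,true)],3,true); (5,[:: (0,true)],2,true); (4,[:: (0,true)],1,true); (3,[:: (0,true)],0,true)].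

Definition gtab : seq word := [:: [:: (0,false)]; [:: (1,false)]; [:: (2,false)]; [:: (3,false)]].

Lemma iso_gen n1 R1 (ftab : seq word) hcf hcg ic :
  all (wf_word 4) ftab -> all (wf_word n1) gtab ->
  homcert Surf2 (fun x => nth [::] ftab x) R1 hcf ->
  homcert R1 (fun x => nth [::] gtab x) Surf2 hcg ->
  idcert R1 (fun x => wsubst (fun y => nth [::] gtab y) (nth [::] ftab x)) (iota 0 n1) ic ->
  idcert Surf2 (fun x => wsubst (fun y => nth [::] ftab y) (nth [::] gtab x)) (iota 0 4)
         (nseq 4 ([::], [::])) ->
  pres_iso n1 R1 4 Surf2.
Proof.
move=> Hf Hg H1 H2 H3 H4.
exists (fun x => nth [::] ftab x), (fun x => nth [::] gtab x); split.
- by split; [move=> x; exact: wf_nth | exact: homcertP H1].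
- by split; [move=> x; exact: wf_nth | exact: homcertP H2].
- exact: (idcertP H3).
- exact: (idcertP H4).
Qed.

Theorem mainTheorem7 :
  [/\ C_cond 4 P1 /\ T_cond 5 P1,
      C_cond 3 P2 /\ T_cond 7 P2,
      pres_iso 6 P1 4 Surf2 /\ pres_iso 9 P2 4 Surf2 &
      ~ Dehn 6 P1 /\ ~ Dehn 9 P2].
Proof.
split.
- by split; [apply: CbP | apply: TbP]; vm_compute.
- by split; [apply: CbP | apply: TbP]; vm_compute.
- split.
  + by apply: (@iso_gen 6 P1 ftab1 hcf1 hcg1 ic1); vm_compute.
  + by apply: (@iso_gen 9 P2 ftab2 hcf2 hcg2 ic2); vm_compute.
- split.
  + by apply: (@not_Dehn 6 P1 dw1 dc1); vm_compute.
  + by apply: (@not_Dehn 9 P2 dw2 dc2); vm_compute.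
Qed.
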